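(* Let $G\subset\mathbb{K}[\mathbf{x}][\boldsymbol{\partial}]$ be a finite set and let $f\in\mathbb{K}[[x_1,\dots,x_n]]$ be a nonzero formal power series solution of $G$ (i.e. $P(f)=0$ for all $P\in G$) with initial exponent $\mathbf{w}$. Then $\mathbf{w}$ is a root of $\mathrm{ind}(P)$ for each $P\in G$.
   Context: $\mathbb{K}$ is a field of characteristic zero; $\mathbb{K}[\mathbf{x}][\boldsymbol{\partial}]$ is the ring of partial differential operators in $\partial_1,\dots,\partial_n$ with coefficients in $\mathbb{K}[x_1,\dots,x_n]$ ($\partial_i f=f\partial_i+\partial f/\partial x_i$), acting naturally on $\mathbb{K}[[\mathbf{x}]]$. $\prec$ is a fixed graded term order on $\mathbb{N}^n$, applied to monomials $\mathbf{x}^{\mathbf{u}}$; the initial exponent of nonzero $f$ is the $\prec$-smallest exponent occurring in $f$. Indicial polynomial: let $\delta_i=x_i\partial_i$. For nonzero $P=\sum_{|\mathbf{u}|\le m}c_{\mathbf{u}}\boldsymbol{\partial}^{\mathbf{u}}$ of order $m$ (some $c_{\mathbf{u}}\ne0$ with $|\mathbf{u}|=m$), with $\mathbf{m}=(m,\dots,m)$ write uniquely $\mathbf{x}^{\mathbf{m}}P=\sum_{\mathbf{v}\in T}\mathbf{x}^{\mathbf{v}}\big(\sum_{|\mathbf{u}|\le m}c_{\mathbf{u},\mathbf{v}}\boldsymbol{\delta}^{\mathbf{u}}\big)$ with $c_{\mathbf{u},\mathbf{v}}\in\mathbb{K}$ and nonzero inner sums; with $\mathbf{v}_0$ the $\prec$-minimal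 element of $T$, $\mathrm{ind}(P)=\sum_{|\mathbf{u}|\le m}c_{\mathbf{u},\mathbf{v}_0}\mathbf{y}^{\mathbf{u}}\in\mathbb{K}[y_1,\dots,y_n]$; $\mathrm{ind}(0)=0$. *)

(* Defs.v *)
From HB Require Import structures.
From mathcomp Require Import all_boot all_order all_algebra.
From mathcomp Require Export mpoly.
Set Implicit Arguments. Unset Strict Implicit. Unset Printing Implicit Defensive.
Import Order.TTheory GRing.Theory Num.Theory.
Local Open Scope ring_scope.

(* Formal power series in x_1..x_n over K, as coefficient functions
   (coefficient of x^a at the exponent a). *)
Definition powser (K : fieldType) (n : nat) := 'X_{1..n} -> K.

(* Partial differential operators in K[x][d]: an operator
     P = sum_u c_u(x) d^u   (coefficients written on the left, normal form)
   is represented by the polynomial in the "d" variables whose coefficient at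
   the exponent u is c_u(x) in K[x_1..x_n]. *)
Definition diffop (K : fieldType) (n : nat) := {mpoly {mpoly K[n]}[n]}.

Section Action.
Variables (K : fieldType) (n : nat).

Definition pder (u : 'X_{1..n}) (f : powser K n) : powser K n :=
  fun a => f (a + u)%MM * (\prod_(i < n) ((a i + u i) ^_ (u i))%N)%:R.

Definition pmulpoly (c : {mpoly K[n]}) (g : powser K n) : powser K n :=
  fun b => \sum_(v <- msupp c | (v <= b)%MM) c@_v * g (b - v)%MM.

Definition dapply (P : diffop K n) (f : powser K n) : powser K n :=
  fun b => \sum_(u <- msupp P) pmulpoly P@_u (pder u f) b.

Definition dorder (P : diffop K n) : nat := \max_(u <- msupp P) mdeg u.

Definition ffpoly (i : 'I_n) (k : nat) : {mpoly K[n]} :=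
  \prod_(j < k) ('X_i - (j%:R)%:MP).

(* delta^u = x^u d^u = prod_i delta_i(delta_i - 1)...(delta_i - u_i + 1),
   written as a polynomial in y (y_i standing for delta_i). *)
Definition delta_poly (u : 'X_{1..n}) : {mpoly K[n]} :=
  \prod_(i < n) ffpoly i (u i).

(* x^m P = sum_v x^v (sum_u c_{u,v} delta^u); indpart P v is the inner
   polynomial (in y) attached to x^v, m = (order P, ..., order P).
   Indeed x^m c_u(x) d^u = sum_w c_{u,w} x^(w + m - u) x^u d^u. *)
Definition mvec (m : nat) : 'X_{1..n} := [multinom m | i < n].

Definition indpart (P : diffop K n) (v : 'X_{1..n}) : {mpoly K[n]} :=
  let m := mvec (dorder P) in
  \sum_(u <- msupp P)
     \sum_(w <- msupp P@_u | (w + m - u)%MM == v) (P@_u)@_w *: delta_poly u.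

Definition indT (P : diffop K n) : seq 'X_{1..n} :=
  let m := mvec (dorder P) in
  [seq v <- undup (flatten [seq [seq (w + m - u)%MM | w <- msupp P@_u]
                           | u <- msupp P]) | indpart P v != 0].

Definition seqmin (lt : rel 'X_{1..n}) (d : 'X_{1..n}) (s : seq 'X_{1..n}) :=
  foldr (fun a b => if lt a b then a else b) (head d s) s.

(* indicial polynomial ind(P) w.r.t. the term order lt; ind(0) = 0
   (T is empty for P = 0 and then indpart P _ = 0). *)
Definition indicial (lt : rel 'X_{1..n}) (P : diffop K n) : {mpoly K[n]} :=
  indpart P (seqmin lt 0%MM (indT P)).

End Action.

Definition graded_term_order (n : nat) (lt : rel 'X_{1..n}) : Prop :=
  [/\ irreflexive lt, transitive lt,
      (forall a b, a != b -> lt a b || lt b a),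
      (forall a b c, lt a b -> lt (a + c)%MM (b + c)%MM) &
      (forall a b, (mdeg a < mdeg b)%N -> lt a b)].

Definition initial_exponent (K : fieldType) (n : nat) (lt : rel 'X_{1..n})
  (f : powser K n) (w : 'X_{1..n}) : Prop :=
  f w != 0 /\ (forall a, f a != 0 -> a != w -> lt w a).

(* Main.v *)
Require Import Defs.
From HB Require Import structures.
From mathcomp Require Import all_boot all_order all_algebra.
From mathcomp Require Import mpoly.
From mathcomp Require Import zify.
Set Implicit Arguments. Unset Strict Implicit. Unset Printing Implicit Defensive.
Import Order.TTheory GRing.Theory Num.Theory.
Local Open Scope ring_scope.

Section H.
Variables (K : fieldType) (n : nat).

Definition ffm (a u : 'X_{1..n}) : nat := (\prod_(i < n) (a i ^_ u i))%N.

Lemma ffpoly_eval (a : 'X_{1..n}) i k :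
  (ffpoly K i k).@[fun j => ((a j)%:R : K)] = ((a i ^_ k)%:R : K).
Proof.
elim: k => [|k IH].
  by rewrite /ffpoly big_ord0 meval1.
rewrite /ffpoly big_ord_recr /= mevalM -/(ffpoly K i k) IH mevalB mevalXU mevalC.
rewrite ffactnSr natrM; case: (leqP k (a i)) => hk; first by rewrite natrB.
by rewrite ffact_small //= !mul0r.
Qed.

Lemma delta_eval (a u : 'X_{1..n}) :
  (delta_poly K u).@[fun j => ((a j)%:R : K)] = ((ffm a u)%:R : K).
Proof.
rewrite /delta_poly rmorph_prod /ffm natr_prod; apply: eq_bigr => i _.
exact: ffpoly_eval.
Qed.

Lemma sum_pick (L : seq 'X_{1..n}) (x : 'X_{1..n}) (p : pred 'X_{1..n}) (g : 'X_{1..n} -> K) :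
  uniq L -> x \in L ->
  \sum_(y <- L | p y) (if x == y then g y else 0) = if p x then g x else 0.
Proof.
move=> uL xL; rewrite (big_rem x) //= eqxx big1_seq ?addr0 //.
move=> y /andP[_ hy]; move: hy; rewrite mem_rem_uniq // inE => /andP[hyx _].
by rewrite eq_sym (negbTE hyx).
Qed.

Variable lt : rel 'X_{1..n}.
Hypothesis Hirr : irreflexive lt.
Hypothesis Htr : transitive lt.
Hypothesis Htot : forall a b, a != b -> lt a b || lt b a.

Lemma foldr_min z s (r := foldr (fun a b => if lt a b then a else b) z s) :
  [/\ r \in z :: s, (r == z) || lt r z & forall x, x \in s -> (r == x) || lt r x].
Proof.
rewrite {}/r; elim: s => [|a s [IH1 IH2 IH3]] /=.
  by split => //; rewrite ?inE ?eqxx.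
set r := foldr _ _ _ in IH1 IH2 IH3 *.
case: ifP => har.
  split.
  - by rewrite !inE eqxx orbT.
  - case/orP: IH2 => [/eqP <-|h]; first by rewrite har orbT.
    by rewrite (Htr har h) orbT.
  - move=> x; rewrite inE => /orP[/eqP ->|/IH3 /orP[/eqP <-|h]]; first by rewrite eqxx.
      by rewrite har orbT.
    by rewrite (Htr har h) orbT.
split.
- by move: IH1; rewrite !inE => /orP[->|->]; rewrite ?orbT.
- exact: IH2.
- move=> x; rewrite inE => /orP[/eqP ->|/IH3 //].
  case: (eqVneq r a) => [-> //|hne].
  by case/orP: (Htot hne) => h; [rewrite h orbT | rewrite h in har].
Qed.

Lemma seqmin_mem d s : s != [::] -> seqmin lt d s \in s.
Proof.
case: s => [//|a s] _; rewrite /seqmin /=.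
have [h _ _] := foldr_min a (a :: s); move: h; rewrite /= inE => /orP[/eqP ->|//].
by rewrite inE eqxx.
Qed.

Lemma seqmin_min d s x : x \in s -> x != seqmin lt d s -> lt (seqmin lt d s) x.
Proof.
case: s => [//|a s] hx hne; rewrite /seqmin /=.
have [_ _ h] := foldr_min a (a :: s).
move: (h x hx) => /orP[/eqP e|//]; move: hne; rewrite /seqmin /=; rewrite /= in e; rewrite e eqxx //.
Qed.

End H.

Section M.
Variables (K : fieldType) (n : nat).

Definition candL (P : diffop K n) : seq 'X_{1..n} :=
  undup (flatten [seq [seq (w + mvec n (dorder P) - u)%MM | w <- msupp P@_u]
                           | u <- msupp P]).

Lemma candL_mem (P : diffop K n) u v : u \in msupp P -> v \in msupp P@_u ->
  (v + mvec n (dorder P) - u)%MM \in candL P.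
Proof.
move=> hu hv; rewrite mem_undup; apply/flattenP.
exists [seq (w + mvec n (dorder P) - u)%MM | w <- msupp P@_u]; first by apply/mapP; exists u.
by apply/mapP; exists v.
Qed.

Lemma indpart_nz (P : diffop K n) v : indpart P v != 0 -> v \in candL P.
Proof.
apply: contraR => hv; rewrite /indpart /= big_seq; apply/eqP/big1 => u hu.
rewrite big_seq_cond; apply: big1 => x /andP[hx /eqP he].
by move: hv; rewrite -he candL_mem.
Qed.

Lemma indT_mem (P : diffop K n) v : (v \in indT P) = (v \in candL P) && (indpart P v != 0).
Proof. by rewrite /indT mem_filter andbC. Qed.

Lemma indpart_eval (P : diffop K n) v (a : 'X_{1..n}) :
  (indpart P v).@[fun j => ((a j)%:R : K)] =
  \sum_(u <- msupp P) \sum_(x <- msupp P@_u | (x + mvec n (dorder P) - u)%MM == v)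
     (P@_u)@_x * ((ffm a u)%:R : K).
Proof.
rewrite /indpart /= raddf_sum; apply: eq_bigr => u _.
rewrite raddf_sum; apply: eq_bigr => x _.
by apply: (etrans (mevalZ _ _ _)); rewrite delta_eval.
Qed.

Lemma supp_le (P : diffop K n) u : u \in msupp P -> forall i, (u i <= dorder P)%N.
Proof.
move=> hu i; apply: leq_trans (_ : mdeg u <= _)%N.
  by rewrite mdegE (bigD1 i) //= leq_addr.
by rewrite /dorder; apply: (leq_bigmax_seq _ (P:=xpredT)) => //. Qed.


Lemma not_lem (a b : 'X_{1..n}) : ~~ (a <= b)%MM -> exists i, (b i < a i)%N.
Proof.
move=> h; apply/existsP; apply: contraR h => /existsPn h; apply/mnm_lepP => j.
by move: (h j); rewrite -leqNgt.
Qed.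

Lemma ffm_zero (a u : 'X_{1..n}) i : (a i < u i)%N -> ffm a u = 0%N.
Proof. by move=> h; rewrite /ffm (bigD1 i) //= ffact_small // mul0n. Qed.

Lemma main_aux (lt : rel 'X_{1..n}) (hlt : graded_term_order lt)
  (P : diffop K n) (f : powser K n) (w : 'X_{1..n})
  (fsol : forall b, dapply P f b = 0) (hw : initial_exponent lt f w) :
  (indicial lt P).@[fun i => ((w i)%:R : K)] = 0.
Proof.
case: hlt => Hirr Htr Htot Hadd _.
case: hw => fw0 hwmin.
rewrite /indicial.
set v0 := seqmin lt 0%MM (indT P).
have [->|nz] := eqVneq (indpart P v0) 0; first by rewrite meval0.
have v0L : v0 \in candL P by exact: indpart_nz.
have v0T : v0 \in indT P by rewrite indT_mem v0L nz.
set t := (v0 + w)%MM.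
have hum := @supp_le P.
have hM : forall i, mvec n (dorder P) i = dorder P by move=> i; rewrite mnmE.
have E0 : \sum_(u <- msupp P) \sum_(v <- msupp P@_u | (v + mvec n (dorder P) - u <= t)%MM)
   P@_u@_v * (f (t - (v + mvec n (dorder P) - u))%MM *
              ((ffm (t - (v + mvec n (dorder P) - u))%MM u)%:R : K)) = 0.
  have [hMt|hMt] := boolP (mvec n (dorder P) <= t)%MM.
  - rewrite -[RHS](fsol (t - mvec n (dorder P))%MM) /dapply; apply: eq_big_seq => u hu.
    rewrite /pmulpoly /pder big_mkcond [RHS]big_mkcond; apply: eq_bigr => v _.
    have hu' := hum u hu; move/mnm_lepP: (hMt) => hMt'.
    have [hv|hv] := boolP (v <= t - mvec n (dorder P))%MM.
    + move/mnm_lepP: (hv) => hv'.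
      have hD : (v + mvec n (dorder P) - u <= t)%MM.
        apply/mnm_lepP => i; move: (hv' i) (hMt' i) (hu' i).
        rewrite !(mnmDE, mnmBE) !hM; lia.
      have eq1 : (t - (v + mvec n (dorder P) - u))%MM = (t - mvec n (dorder P) - v + u)%MM.
        apply/mnmP => i; move: (hv' i) (hMt' i) (hu' i).
        rewrite !(mnmDE, mnmBE) !hM; lia.
      rewrite hD eq1; congr (_ * (_ * _%:R)); apply: eq_bigr => i _; by rewrite mnmDE.
    + have [i hi] := not_lem hv.
      case: ifP => // hD; move/mnm_lepP: hD => hD.
      rewrite (@ffm_zero _ _ i) ?mulr0n ?mulr0 //.
      move: (hD i) (hMt' i) (hu' i) hi; rewrite !(mnmDE, mnmBE) !hM; lia.
  - have [i hi] := not_lem hMt.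
    apply: big1_seq => u /andP[_ hu]; apply: big1 => v /mnm_lepP hD.
    have hu' := hum u hu.
    rewrite (@ffm_zero _ _ i) ?mulr0n ?mulr0 //.
    move: (hD i) (hu' i) hi; rewrite !(mnmDE, mnmBE) !hM; lia.
have E1 : \sum_(u <- msupp P) \sum_(v <- msupp P@_u | (v + mvec n (dorder P) - u <= t)%MM)
   P@_u@_v * (f (t - (v + mvec n (dorder P) - u))%MM *
              ((ffm (t - (v + mvec n (dorder P) - u))%MM u)%:R : K)) =
  \sum_(v' <- candL P | (v' <= t)%MM)
     f (t - v')%MM * (indpart P v').@[fun j => (((t - v')%MM j)%:R : K)].
  symmetry.
  under eq_bigr => v' _ do rewrite indpart_eval mulr_sumr.
  rewrite exchange_big /=; apply: eq_big_seq => u hu.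
  under eq_bigr => v' _ do rewrite mulr_sumr big_mkcond /=.
  rewrite exchange_big /= [RHS]big_mkcond /=; apply: eq_big_seq => v hv.
  rewrite (@sum_pick _ _ _ _ _ (fun y => f (t - y)%MM * (P@_u@_v * ((ffm (t - y)%MM u)%:R : K)))).
  - by case: ifP => // _; rewrite mulrCA.
  - exact: undup_uniq.
  - exact: candL_mem.
have tv0 : (t - v0)%MM = w by rewrite /t addmC addmK.
move: E0; rewrite E1 (big_rem v0) //= lem_addr tv0 big1_seq ?addr0.
  by move/eqP; rewrite mulf_eq0 (negbTE fw0) /= => /eqP.
move=> v' /andP[hle]; rewrite mem_rem_uniq ?undup_uniq // inE => /andP[hne hv'L].
have [->|nz'] := eqVneq (indpart P v') 0; first by rewrite meval0 mulr0.
have hT : v' \in indT P by rewrite indT_mem hv'L nz'.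
have hlt : lt v0 v' := seqmin_min Htr Htot hT hne.
suff -> : f (t - v')%MM = 0 by rewrite mul0r.
apply/eqP; apply: contraT => hf.
have ha : ((t - v') + v')%MM = t := submK hle.
have [eaw|naw] := eqVneq (t - v')%MM w.
  move: ha; rewrite eaw /t addmC => e; have ev : v' = v0 by rewrite -(addmK w v') e addmK.
  by move: hne; rewrite ev eqxx.
have hwa := hwmin _ hf naw.
have h1 := Hadd _ _ v0 hwa.
have h2 := Hadd _ _ (t - v')%MM hlt.
rewrite (addmC (t - v')%MM v0) in h1.
have := Htr _ _ _ h1 h2.
by rewrite (addmC w v0) -/t (addmC v' (t - v')%MM) ha Hirr.
Qed.

End M.

Theorem mainTheorem8 (K : fieldType) (n : nat)
  (charK0 : [pchar K] =i pred0)
  (lt : rel 'X_{1..n}) (hlt : graded_term_order lt)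
  (G : seq (diffop K n)) (f : powser K n) (w : 'X_{1..n})
  (fnz : exists a, f a != 0)
  (fsol : forall P, P \in G -> forall b, dapply P f b = 0)
  (hw : initial_exponent lt f w) :
  forall P, P \in G -> (indicial lt P).@[fun i => ((w i)%:R : K)] = 0.
Proof.
by move=> P PG; apply: main_aux hlt _ _ _ (fsol P PG) hw.
Qed.
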